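(* Let $f$ be convex and differentiable with $L$-Lipschitz gradient, $h$ proper closed convex, $F=f+h$, $\mathbf{x}^*$ a minimizer of $F$, $\alpha>0$ with $\alpha L\le1$, and $\varepsilon\ge0$. Let $\mathbf{x}^{(k-1)},\mathbf{v}^{(k)},\mathbf{e}^{(k)}\in\mathbb{R}^d$ with $\|\mathbf{v}^{(k)}-\nabla f(\mathbf{x}^{(k-1)})\|\le M$, let $\mathbf{q}^{(k)}=\mathbf{x}^{(k-1)}-\alpha(\mathbf{v}^{(k)}+\mathbf{e}^{(k)})$, and let $\mathbf{x}^{(k)}$ be an $\varepsilon$-inexact proximal point of $\mathbf{q}^{(k)}$. Let $\mathbf{g}$ satisfy $\frac1\alpha(\mathbf{q}^{(k)}+\mathbf{g}-\mathbf{x}^{(k)})\in\partial_\varepsilon h(\mathbf{x}^{(k)})$ and $\|\mathbf{g}\|\le\sqrt{2\alpha\varepsilon}$, let $\boldsymbol{\xi}^{(k-1)}=\frac1\alpha(\mathbf{x}^{(k-1)}-\mathbf{x}^{(k)})$, and let $\underline{\mathbf{x}}$ be an $\varepsilon$-inexact proximal point of $\mathbf{x}^{(k-1)}-\alpha\nabla f(\mathbf{x}^{(k-1)})$. Then $$-\alpha^2\|\boldsymbol{\xi}^{(k-1)}\|^2-2\alpha\langle\boldsymbol{\xi}^{(k-1)},\mathbf{x}^{(k)}-\mathbf{x}^*\rangle\le-2\alpha\big(F(\mathbf{x}^{(k)})-F(\mathbf{x}^* )\big)+2\alpha\varepsilon+2\alpha^2\|\mathbf{v}^{(k)}-\nabla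 f(\mathbf{x}^{(k-1)})\|^2+\big(2\alpha^2\|\mathbf{e}^{(k)}\|+6\alpha\sqrt{2\alpha\varepsilon}\big)M-2\alpha\langle\mathbf{x}^{(k)}-\mathbf{x}^*,\mathbf{e}^{(k)}-\tfrac1\alpha\mathbf{g}\rangle-2\alpha\langle\underline{\mathbf{x}}-\mathbf{x}^*,\mathbf{v}^{(k)}-\nabla f(\mathbf{x}^{(k-1)})\rangle.$$
   Context: A point $\mathbf{x}$ is an $\varepsilon$-inexact proximal point of $\mathbf{z}$ (with parameter $\alpha$) if $\frac1{2\alpha}\|\mathbf{x}-\mathbf{z}\|^2+h(\mathbf{x})\le\min_{\mathbf{y}}\{\frac1{2\alpha}\|\mathbf{y}-\mathbf{z}\|^2+h(\mathbf{y})\}+\varepsilon$. The $\varepsilon$-subdifferential is $\partial_\varepsilon h(\mathbf{x})=\{\mathbf{p}: h(\mathbf{y})\ge h(\mathbf{x})+\langle\mathbf{p},\mathbf{y}-\mathbf{x}\rangle-\varepsilon\ \forall\mathbf{y}\}$. *)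

(* Defs.v *)
From HB Require Import structures.
From mathcomp Require Import all_boot all_order all_algebra.
From mathcomp Require Import classical_sets boolp reals constructive_ereal ereal.
Set Implicit Arguments. Unset Strict Implicit. Unset Printing Implicit Defensive.
Import Order.TTheory GRing.Theory Num.Theory.
Local Open Scope ring_scope.
Local Open Scope classical_set_scope.

Section Defs.
Variables (R : realType) (d : nat).
Local Notation V := 'rV[R]_d.

Definition dotv (u v : V) : R := (u *m v^T) 0 0.
Definition nrm (u : V) : R := Num.sqrt (dotv u u).

Definition is_gradient (f : V -> R) (g : V) (x : V) : Prop :=
  forall e : R, 0 < e -> exists2 delta : R, 0 < delta &
    forall y : V, nrm (y - x) < delta ->
      `|f y - f x - dotv g (y - x)| <= e * nrm (y - x).

Definition convex_fun (f : V -> R) : Prop :=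
  forall (x y : V) (t : R), 0 <= t <= 1 ->
    f (t *: x + (1 - t) *: y) <= t * f x + (1 - t) * f y.

Definition lipschitz_map (L : R) (G : V -> V) : Prop :=
  forall x y : V, nrm (G x - G y) <= L * nrm (x - y).

Definition proper_fun (h : V -> \bar R) : Prop :=
  (forall x, h x != -oo%E) /\ (exists x, h x \is a fin_num).

Definition closed_fun (h : V -> \bar R) : Prop :=
  forall (x : V) (a : R), (a%:E < h x)%E ->
    exists2 delta : R, 0 < delta &
      forall y : V, nrm (y - x) < delta -> (a%:E < h y)%E.

Definition convex_efun (h : V -> \bar R) : Prop :=
  forall (x y : V) (t : R), 0 < t < 1 ->
    (h (t *: x + (1 - t) *: y)%R <= t%:E * h x + (1 - t)%R%:E * h y)%E.

Definition inexact_prox (h : V -> \bar R) (alpha eps : R) (z x : V) : Prop :=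
  ((1 / (2 * alpha) * nrm (x - z) ^+ 2)%:E + h x <=
   ereal_inf [set ((1 / (2 * alpha) * nrm (y - z) ^+ 2)%:E + h y)%E | y in [set: V]]
   + eps%:E)%E.

Definition eps_subdiff (h : V -> \bar R) (eps : R) (x p : V) : Prop :=
  forall y : V, (h y >= h x + (dotv p (y - x)%R)%:E - eps%:E)%E.

End Defs.

(* Main.v *)
Require Import Defs.
From HB Require Import structures.
From mathcomp Require Import all_boot all_order all_algebra.
From mathcomp Require Import classical_sets boolp reals constructive_ereal ereal.
From mathcomp Require Import ring lra.
Import Order.TTheory GRing.Theory Num.Theory.
Local Open Scope ring_scope.

Section Vec.
Variables (R : realType) (d : nat).
Local Notation V := 'rV[R]_d.
Implicit Types (a b c : V) (k : R).

Lemma dotvDl a b c : dotv (a + b) c = dotv a c + dotv b c.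
Proof. by rewrite /dotv mulmxDl mxE. Qed.
Lemma dotvZl k a c : dotv (k *: a) c = k * dotv a c.
Proof. by rewrite /dotv -scalemxAl mxE. Qed.
Lemma dotvC a b : dotv a b = dotv b a.
Proof. by rewrite /dotv -(trmxK (b *m a^T)) trmx_mul trmxK [X in _ = X]mxE. Qed.
Lemma dotvNl a c : dotv (- a) c = - dotv a c.
Proof. by rewrite -scaleN1r dotvZl mulN1r. Qed.
Lemma dotvDr a b c : dotv c (a + b) = dotv c a + dotv c b.
Proof. by rewrite dotvC dotvDl !(dotvC c). Qed.
Lemma dotvZr k a c : dotv c (k *: a) = k * dotv c a.
Proof. by rewrite dotvC dotvZl dotvC. Qed.
Lemma dotvNr a c : dotv c (- a) = - dotv c a.
Proof. by rewrite dotvC dotvNl dotvC. Qed.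
Lemma dotvBl a b c : dotv (a - b) c = dotv a c - dotv b c.
Proof. by rewrite dotvDl dotvNl. Qed.
Lemma dotvBr a b c : dotv c (a - b) = dotv c a - dotv c b.
Proof. by rewrite dotvDr dotvNr. Qed.
Lemma dotv_ge0 a : 0 <= dotv a a.
Proof.
rewrite /dotv mxE; apply: sumr_ge0 => i _; rewrite mxE -expr2; exact: sqr_ge0.
Qed.
Lemma nrm_ge0 a : 0 <= nrm a.
Proof. exact: sqrtr_ge0. Qed.
Lemma nrm2 a : nrm a ^+ 2 = dotv a a.
Proof. by rewrite /nrm sqr_sqrtr // dotv_ge0. Qed.
Lemma nrmZ k a : nrm (k *: a) = `|k| * nrm a.
Proof.
by rewrite /nrm dotvZl dotvZr mulrA -expr2 sqrtrM ?sqr_ge0 // sqrtr_sqr.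
Qed.
Lemma nrmN a : nrm (- a) = nrm a.
Proof. by rewrite /nrm dotvNl dotvNr opprK. Qed.

Lemma nrm2D a b : nrm (a + b) ^+ 2 = dotv a a + 2 * dotv a b + dotv b b.
Proof. by rewrite nrm2 dotvDl !dotvDr (dotvC b a); ring. Qed.
Lemma nrm2DZ a b k : nrm (a + k *: b) ^+ 2 =
  dotv a a + 2 * k * dotv a b + k ^+ 2 * dotv b b.
Proof. by rewrite nrm2 dotvDl !dotvDr !dotvZl !dotvZr (dotvC b a); ring. Qed.

Lemma CS a b : dotv a b <= nrm a * nrm b.
Proof.
have H : forall l : R, 2 * l * dotv a b <= l ^+ 2 * dotv a a + dotv b b.
  move=> l; have := dotv_ge0 (l *: a - b).
  rewrite !(dotvDl, dotvDr, dotvNl, dotvNr, dotvZl, dotvZr) (dotvC b a).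
  move=> ?; nra.
have [hb|hb] := lerP (dotv a b) 0.
  apply: le_trans hb _; apply: mulr_ge0; exact: nrm_ge0.
have ha : 0 < dotv a a.
  rewrite lt_neqAle dotv_ge0 andbT; apply/negP => /eqP ha.
  have := H ((dotv b b + 1) / (2 * dotv a b)).
  have -> : 2 * ((dotv b b + 1) / (2 * dotv a b)) * dotv a b = dotv b b + 1.
    by field; rewrite gt_eqF.
  rewrite -ha mulr0 add0r; lra.
have H2 : dotv a b ^+ 2 <= dotv a a * dotv b b.
  have := H (dotv a b / dotv a a).
  have -> : 2 * (dotv a b / dotv a a) * dotv a b = 2 * (dotv a b ^+ 2 / dotv a a).
    by field; rewrite gt_eqF.
  have -> : (dotv a b / dotv a a) ^+ 2 * dotv a a = dotv a b ^+ 2 / dotv a a.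
    by field; rewrite gt_eqF.
  move=> H1; have H3 : dotv a b ^+ 2 / dotv a a <= dotv b b by lra.
  by rewrite mulrC -ler_pdivrMr.
rewrite /nrm -sqrtrM ?dotv_ge0 //.
have {1}-> : dotv a b = Num.sqrt (dotv a b ^+ 2) by rewrite sqrtr_sqr ger0_norm ?ltW.
by rewrite ler_sqrt // mulr_ge0 ?dotv_ge0.
Qed.

Lemma grad_ineq (f : V -> R) (G : V -> V) :
  convex_fun f -> (forall x, is_gradient f (G x) x) ->
  forall x y, f x + dotv (G x) (y - x) <= f y.
Proof.
move=> cf gf x y.
have key : forall e, 0 < e -> dotv (G x) (y - x) <= f y - f x + e * nrm (y - x).
  move=> e e0; have [del del0 Hd] := gf x e e0.
  have nv0 := nrm_ge0 (y - x).
  have pos : 0 < nrm (y - x) + del by lra.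
  set t := del / (nrm (y - x) + del).
  have t0 : 0 < t by rewrite divr_gt0.
  have t1 : t <= 1 by rewrite ler_pdivrMr // mul1r; lra.
  have Hn : nrm ((x + t *: (y - x)) - x) < del.
    rewrite (addrC x) addrK nrmZ (ger0_norm (ltW t0)) /t mulrAC ltr_pdivrMr //.
    nra.
  have := Hd _ Hn; rewrite (addrC x) addrK nrmZ (ger0_norm (ltW t0)).
  rewrite dotvZr.
  rewrite ler_norml => /andP[H1 _].
  have Hc := cf y x t (ltac:(by rewrite (ltW t0) t1)).
  have eq : t *: y + (1 - t) *: x = t *: (y - x) + x.
    by apply/rowP => i; rewrite !mxE; ring.
  rewrite eq in Hc.
  rewrite -(ler_pM2l t0); lra.
suff: dotv (G x) (y - x) <= f y - f x by lra.
apply/ler_addgt0Pr => e e0.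
have nv0 := nrm_ge0 (y - x).
have := key (e / (nrm (y - x) + 1)) (ltac:(by rewrite divr_gt0 //; lra)).
have : e / (nrm (y - x) + 1) * nrm (y - x) <= e.
  rewrite mulrAC ler_pdivrMr; last lra.
  nra.
lra.
Qed.

Lemma descent (f : V -> R) (G : V -> V) (L : R) :
  convex_fun f -> (forall x, is_gradient f (G x) x) -> lipschitz_map L G ->
  forall x v, f (x + v) - f x - dotv (G x) v <= L / 2 * nrm v ^+ 2.
Proof.
move=> cf gf lip.
have step : forall (n : nat) x v, f (x + v) - f x - dotv (G x) v <=
    (1/2 + ((2:R) ^+ n.+1)^-1) * L * nrm v ^+ 2.
  elim=> [|n IH] x v.
    have -> : 1/2 + ((2:R) ^+ 1)^-1 = 1 by rewrite expr1; field.
    rewrite mul1r.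
    have := @grad_ineq f G cf gf (x + v) x.
    rewrite opprD addrA subrr add0r dotvNr => H1.
    have H2 := CS (G (x + v) - G x) v.
    have H3 : nrm (G (x + v) - G x) * nrm v <= L * nrm v * nrm v.
      apply: ler_wpM2r; first exact: nrm_ge0.
      by have := lip (x + v) x; rewrite (addrC x) addrK.
    rewrite dotvBl in H2; rewrite expr2; lra.
  set hv := 2^-1 *: v.
  have ev : v = hv + hv by apply/rowP => i; rewrite !mxE; field.
  have e1 : x + v = (x + hv) + hv by rewrite -addrA -ev.
  have -> : dotv (G x) v = dotv (G x) hv + dotv (G x) hv by rewrite -dotvDr -ev.
  rewrite e1.
  have I1 := IH x hv; have I2 := IH (x + hv) hv.
  have H2 := CS (G (x + hv) - G x) hv.
  have H3 : nrm (G (x + hv) - G x) * nrm hv <= L * nrm hv * nrm hv.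
    apply: ler_wpM2r; first exact: nrm_ge0.
    by have := lip (x + hv) x; rewrite (addrC x) addrK.
  rewrite dotvBl in H2.
  have nh : nrm hv = nrm v / 2.
    by rewrite /hv nrmZ ger0_norm ?invr_ge0 // mulrC.
  have ec : (1/2 + ((2:R) ^+ n.+2)^-1) * L * nrm v ^+ 2 =
     2 * ((1/2 + ((2:R) ^+ n.+1)^-1) * L * nrm hv ^+ 2) + L * nrm hv * nrm hv.
    rewrite nh exprS; field; by rewrite expf_neq0.
  rewrite ec; lra.
move=> x v.
set K := L * nrm v ^+ 2.
have -> : L / 2 * nrm v ^+ 2 = K / 2 by rewrite /K mulrAC.
have [K0|K0] := lerP K 0.
  have := step 0%N x v; rewrite expr1 -mulrA -/K.
  have -> : 1/2 + 2^-1 = 1 :> R by field.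
  rewrite mul1r; lra.
apply/ler_addgt0Pr => e e0.
have Ke : 0 <= K / e by rewrite divr_ge0 // ltW.
have HN := archi_boundP Ke; set N := Num.Def.archi_bound (K / e) in HN.
have := step N x v; rewrite -mulrA -/K => H.
have HP : (N%:R : R) < (2:R) ^+ N.+1.
  rewrite -natrX ltr_nat; apply: (@ltn_trans N.+1) => //; exact: ltn_expl.
have p0 : (0:R) < (2:R) ^+ N.+1 by rewrite exprn_gt0.
have : ((2:R) ^+ N.+1)^-1 * K <= e.
  rewrite mulrC ler_pdivrMr // -ler_pdivrMl //.
  rewrite mulrC; apply: ltW; exact: lt_trans HN HP.
move=> He; apply: (le_trans H); rewrite mulrDl (mulrC (1/2)) mul1r lerD2l.
exact: He.
Qed.

End Vec.

Set Implicit Arguments. Unset Strict Implicit.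

Section E.
Variables (R : realType) (d : nat).
Local Notation V := 'rV[R]_d.

Lemma prox_le (h : V -> \bar R) a e z x : inexact_prox h a e z x ->
  forall y, ((1/(2*a) * nrm (x - z) ^+ 2)%:E + h x <=
             (1/(2*a) * nrm (y - z) ^+ 2)%:E + h y + e%:E)%E.
Proof.
move=> H y; apply: le_trans H _; apply: leeD2r; apply: ereal_inf_lbound.
by exists y.
Qed.

Lemma fin_le (x : \bar R) (r : R) : x != -oo%E -> (x <= r%:E)%E -> x \is a fin_num.
Proof. by case: x. Qed.

Lemma fin_addl (c : R) (x : \bar R) (r : R) : x != -oo%E -> (c%:E + x <= r%:E)%E ->
  x \is a fin_num.
Proof. by case: x. Qed.

Lemma prox_fin (h : V -> \bar R) a e z x : proper_fun h -> inexact_prox h a e z x ->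
  h x \is a fin_num.
Proof.
case=> hN [x0 hx0] H; have := prox_le H x0.
rewrite -(fineK hx0) -!EFinD; apply: fin_addl; exact: hN.
Qed.

End E.

Unset Implicit Arguments. Set Strict Implicit.

Theorem proposition1 (R : realType) (d : nat)
  (f : 'rV[R]_d -> R) (gradf : 'rV[R]_d -> 'rV[R]_d) (L : R)
  (h : 'rV[R]_d -> \bar R) (xstar : 'rV[R]_d) (alpha eps M : R)
  (xkm1 vk ek xk g xbar : 'rV[R]_d) :
  convex_fun f ->
  (forall x, is_gradient f (gradf x) x) ->
  lipschitz_map L gradf ->
  proper_fun h -> closed_fun h -> convex_efun h ->
  (forall y, ((f xstar)%:E + h xstar <= (f y)%:E + h y)%E) ->
  0 < alpha -> alpha * L <= 1 -> 0 <= eps ->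
  nrm (vk - gradf xkm1) <= M ->
  let qk := xkm1 - alpha *: (vk + ek) in
  inexact_prox h alpha eps qk xk ->
  eps_subdiff h eps xk (alpha^-1 *: (qk + g - xk)) ->
  nrm g <= Num.sqrt (2 * alpha * eps) ->
  let xi := alpha^-1 *: (xkm1 - xk) in
  inexact_prox h alpha eps (xkm1 - alpha *: gradf xkm1) xbar ->
  let F := fun x => ((f x)%:E + h x)%E in
  ((- alpha ^+ 2 * nrm xi ^+ 2 - 2 * alpha * dotv xi (xk - xstar))%:E <=
   (- (2 * alpha))%:E * (F xk - F xstar)
   + (2 * alpha * eps
      + 2 * alpha ^+ 2 * nrm (vk - gradf xkm1) ^+ 2
      + (2 * alpha ^+ 2 * nrm ek + 6 * alpha * Num.sqrt (2 * alpha * eps)) * M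
      - 2 * alpha * dotv (xk - xstar) (ek - alpha^-1 *: g)
      - 2 * alpha * dotv (xbar - xstar) (vk - gradf xkm1))%:E)%E.
Proof.
move=> cf gf lip hp _ hcv opt a0 aL e0 hM qk Hpx Hsub Hg xi Hbar.
rewrite [X in is_true X]/=.
have hN := hp.1.
have hk := prox_fin hp Hpx; have hb := prox_fin hp Hbar.
have hs : h xstar \is a fin_num.
  case: hp => _ [x0 hx0]; have := opt x0; rewrite -(fineK hx0) -EFinD.
  apply: fin_addl; exact: hN.
have Ek : h xk = (fine (h xk))%:E by rewrite fineK.
have Eb : h xbar = (fine (h xbar))%:E by rewrite fineK.
have Es : h xstar = (fine (h xstar))%:E by rewrite fineK.
set Hk := fine (h xk) in Ek; set Hb := fine (h xbar) in Eb; set Hs := fine (h xstar) in Es.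
set G0 := gradf xkm1.
set u := vk - G0.
set s := Num.sqrt (2 * alpha * eps).
have s0 : 0 <= s by exact: sqrtr_ge0.
have s2 : s ^+ 2 = 2 * alpha * eps by rewrite sqr_sqrtr // mulr_ge0 // mulr_ge0 // ltW.
set p := alpha^-1 *: (qk + g - xk).
set D := xbar - xk.
have an : alpha != 0 by rewrite gt_eqF.
have Dbound : dotv D u <= alpha * nrm u ^+ 2 + (alpha * nrm ek + 3 * s) * M.
  set w := u + ek.
  set z0 := xkm1 - alpha *: gradf xkm1.
  set P := xk - z0.
  have a2p : 0 < 2 * alpha by rewrite mulr_gt0.
  have tineq : forall t, 0 < t -> t < 1 ->
      t * (2 - t) * dotv D D <=
      t * (2 * alpha * dotv w D - 2 * dotv g D + 2 * alpha * eps) + 2 * alpha * eps.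
    move=> t t0 t1.
    set yt := t *: xk + (1 - t) *: xbar.
    have t01 : 0 < t < 1 by rewrite t0 t1.
    have cv := hcv xk xbar t t01.
    have fyt : h yt \is a fin_num.
      move: cv; rewrite Ek Eb -!EFinM -EFinD; apply: fin_le; exact: hN.
    have Ey : h yt = (fine (h yt))%:E by rewrite fineK.
    set Hy := fine (h yt) in Ey.
    have c2 : Hy <= t * Hk + (1 - t) * Hb.
      by rewrite -lee_fin EFinD !EFinM -Ek -Eb -Ey.
    have c1 := prox_le Hbar yt; rewrite -/z0 Eb Ey -!EFinD lee_fin in c1.
    have c1' : nrm (xbar - z0) ^+ 2 + 2 * alpha * Hb <=
               nrm (yt - z0) ^+ 2 + 2 * alpha * Hy + 2 * alpha * eps.
      have := ler_wpM2l (ltW a2p) c1.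
      have -> : 2 * alpha * (1 / (2 * alpha) * nrm (xbar - z0) ^+ 2 + Hb)
          = nrm (xbar - z0) ^+ 2 + 2 * alpha * Hb by field.
      have -> : 2 * alpha * (1 / (2 * alpha) * nrm (yt - z0) ^+ 2 + Hy + eps)
          = nrm (yt - z0) ^+ 2 + 2 * alpha * Hy + 2 * alpha * eps by field.
      done.
    have i1 : xbar - z0 = P + D.
      by rewrite /P /D /z0; apply/rowP => i; rewrite !mxE; ring.
    have i2 : yt - z0 = P + (1 - t) *: D.
      by rewrite /yt /P /D /z0; apply/rowP => i; rewrite !mxE; ring.
    have n1 : nrm (P + D) ^+ 2 = dotv P P + 2 * dotv P D + dotv D D.
      exact: nrm2D.
    have n2 : nrm (P + (1 - t) *: D) ^+ 2 =
        dotv P P + 2 * (1 - t) * dotv P D + (1 - t) ^+ 2 * dotv D D.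
      by rewrite nrm2DZ.
    rewrite i1 i2 n1 n2 in c1'.
    have c3 : Hk + dotv p D - eps <= Hb.
      by rewrite -lee_fin EFinB EFinD -Ek -Eb; apply: Hsub.
    have ip : alpha * dotv p D = - alpha * dotv w D - dotv P D + dotv g D.
      have -> : p = alpha^-1 *: (- alpha *: w - P + g).
        by rewrite /p /qk /w /u /P /z0 /G0; congr (_ *: _);
           apply/rowP => i; rewrite !mxE; ring.
      rewrite dotvZl mulVKf // (dotvDl _ _ (- alpha *: w - P) g) (dotvBl _ _ (- alpha *: w) P) (dotvZl _ _ (- alpha) w) //.
    have c3' : alpha * Hk - alpha * dotv w D - dotv P D + dotv g D - alpha * eps
               <= alpha * Hb.
      have := ler_wpM2l (ltW a0) c3; rewrite !mulrDr mulrN ip; lra.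
    have c3'' := ler_wpM2l (mulr_ge0 (ler0n _ 2) (ltW t0)) c3'.
    have c2' := ler_wpM2l (ltW a2p) c2.
    move: c1' c2' c3''; clear; move=> *; lra.
  set n := nrm D.
  set nu := nrm u.
  set ne := nrm ek.
  have n0 : 0 <= n by exact: nrm_ge0.
  have nu0 : 0 <= nu by exact: nrm_ge0.
  have ne0 : 0 <= ne by exact: nrm_ge0.
  have DD : dotv D D = n ^+ 2 by rewrite /n nrm2.
  have wD : dotv w D <= nu * n + ne * n.
    rewrite /w (dotvDl _ _ u ek D); have := CS _ _ u D; have := CS _ _ ek D; rewrite -/nu -/n -/ne; lra.
  have gD : - dotv g D <= s * n.
    rewrite -dotvNl; apply: (le_trans (CS _ _ (- g) D)); rewrite nrmN.
    by apply: ler_wpM2r.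
  set a := alpha * (nu + ne).
  have a0' : 0 <= a by rewrite mulr_ge0 // ?addr_ge0 // ltW.
  have T : forall t, 0 < t -> t < 1 ->
      t * (2 - t) * n ^+ 2 <= t * (2 * a * n + 2 * s * n + s ^+ 2) + s ^+ 2.
    move=> t t0 t1; have := tineq t t0 t1; rewrite DD s2.
    have : 2 * alpha * dotv w D - 2 * dotv g D <= 2 * a * n + 2 * s * n.
      have := ler_wpM2l (ltW a2p) wD; rewrite /a; lra.
    move=> H1 H2; apply: (le_trans H2); rewrite lerD2r; apply: ler_wpM2l; first exact: ltW.
    lra.
  have nb : n <= a + 3 * s.
    rewrite leNgt; apply/negP => hn.
    set del := n - a - s.
    have dpos : 2 * s < del by rewrite /del; lra.
    have npos : 0 < n by lra.
    have dn : del <= n by rewrite /del; lra.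
    set t := del / (2 * n).
    have t0 : 0 < t by rewrite divr_gt0 // ?mulr_gt0 //; lra.
    have th : t <= 1 / 2.
      by rewrite /t ler_pdivrMr ?mulr_gt0 //; lra.
    have := T t t0 (ltac:(lra)).
    have E : t * (2 - t) * n ^+ 2 - t * (2 * a * n + 2 * s * n) = 3 / 4 * del ^+ 2.
      rewrite /t /del; field; by rewrite gt_eqF.
    have ts : t * s ^+ 2 <= 1 / 2 * s ^+ 2 by apply: ler_wpM2r => //; exact: sqr_ge0.
    have dd : 4 * s ^+ 2 < del ^+ 2 by nra.
    have := sqr_ge0 s; lra.
  have := CS _ _ D u; rewrite -/n -/nu => H1.
  have H2 := ler_wpM2r nu0 nb.
  have H3 : alpha * ne * nu <= alpha * ne * M by apply: ler_wpM2l => //; apply: mulr_ge0 => //; exact: ltW.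
  have H4 : 3 * s * nu <= 3 * s * M by apply: ler_wpM2l => //; apply: mulr_ge0.
  move: H1 H2 H3 H4; rewrite /a expr2; lra.
set e1v := xk - xstar.
have e1 : xk - xkm1 = - (alpha *: xi).
  by rewrite /xi; apply/rowP => i; rewrite !mxE; field.
have e2 : xstar - xkm1 = - e1v - alpha *: xi.
  by rewrite /xi /e1v; apply/rowP => i; rewrite !mxE; field.
have ep : p = xi - vk - ek + alpha^-1 *: g.
  by rewrite /p /xi /qk; apply/rowP => i; rewrite !mxE; field.
have q1 : dotv G0 (xk - xkm1) = - alpha * dotv G0 xi.
  by rewrite e1 dotvNr dotvZr; ring.
have q2 : dotv G0 (xstar - xkm1) = - dotv G0 e1v - alpha * dotv G0 xi.
  by rewrite e2 dotvBr dotvNr dotvZr.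
have q3 : dotv p (xstar - xk) = - dotv xi e1v + dotv vk e1v + dotv ek e1v
     - alpha^-1 * dotv g e1v.
  rewrite (_ : xstar - xk = - e1v); last by rewrite /e1v opprB.
  rewrite ep dotvNr !dotvDl !dotvNl (dotvZl _ _ _ g); ring.
have q5 : dotv (xk - xstar) (ek - alpha^-1 *: g) = dotv ek e1v - alpha^-1 * dotv g e1v.
  by rewrite -/e1v dotvBr dotvZr (dotvC _ _ e1v ek) (dotvC _ _ e1v g).
have q6 : dotv (xbar - xstar) (vk - G0) = dotv D u + dotv vk e1v - dotv G0 e1v.
  rewrite (_ : xbar - xstar = D + e1v); last by rewrite /D /e1v addrA subrK.
  by rewrite dotvDl /u (dotvBr _ _ vk G0 e1v) (dotvC _ _ e1v vk) (dotvC _ _ e1v G0); ring.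
have q7 : nrm (xk - xkm1) ^+ 2 = alpha ^+ 2 * nrm xi ^+ 2.
  by rewrite e1 nrmN nrmZ (ger0_norm (ltW a0)) exprMn.
have Ha := @descent _ _ f gradf L cf gf lip xkm1 (xk - xkm1).
rewrite [xkm1 + _]addrC subrK -/G0 q1 q7 in Ha.
have Hb' := @grad_ineq _ _ f gradf cf gf xkm1 xstar.
rewrite -/G0 q2 in Hb'.
have Hc : Hk + dotv p (xstar - xk) - eps <= Hs.
  by rewrite -lee_fin EFinB EFinD -Ek -Es; apply: Hsub.
rewrite q3 in Hc.
rewrite Ek Es.
have -> : ((- (2*alpha))%:E * (((f xk)%:E + Hk%:E) - ((f xstar)%:E + Hs%:E)))%E
   = (- (2*alpha) * ((f xk + Hk) - (f xstar + Hs)))%:E by rewrite EFinM EFinB !EFinD.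
rewrite -EFinD lee_fin q5 q6.
have X0 : 0 <= nrm xi ^+ 2 by rewrite exprn_ge0 // nrm_ge0.
have k1 : alpha * L * (alpha ^+ 2 * nrm xi ^+ 2) <= alpha ^+ 2 * nrm xi ^+ 2.
  have aX : 0 <= alpha ^+ 2 * nrm xi ^+ 2 by rewrite mulr_ge0 // exprn_ge0 // ltW.
  by have := ler_wpM2r aX aL; rewrite mul1r.
have ag : alpha * (alpha^-1 * dotv g e1v) = dotv g e1v by rewrite mulVKf.
have a2 : 0 <= 2 * alpha by rewrite mulr_ge0 // ltW.
have ha2 := ler_wpM2l a2 Ha.
have hb2 := ler_wpM2l a2 Hb'.
have hc2 := ler_wpM2l a2 Hc.
have hd2 := ler_wpM2l a2 Dbound.
rewrite -/s. move: ha2 hb2 hc2 hd2 k1 ag X0. clear. move=> *. lra.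
Qed.
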